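(* Let $\alpha,\beta>0$. The Tversky dissimilarity $d^T_{\alpha,\beta}$ is a metric on the collection of all finite subsets of $\mathbb N$ if and only if $\alpha=\beta\ge 1$.
   Context: For finite sets $X,Y$ and parameters $\alpha,\beta>0$, the Tversky index is $S(X,Y)=\dfrac{|X\cap Y|}{|X\cap Y|+\alpha|X\setminus Y|+\beta|Y\setminus X|}$, and the Tversky dissimilarity is $d^T_{\alpha,\beta}(X,Y)=1-S(X,Y)$ if $X\cup Y\ne\emptyset$ and $d^T_{\alpha,\beta}(\emptyset,\emptyset)=0$. A metric satisfies nonnegativity, $d(x,y)=0$ iff $x=y$, symmetry, and the triangle inequality. *)

(* Defs.v *)
(* finite subsets of nat as {fset nat} (finmap), scalars in an
   arbitrary real field R (the statement is purely algebraic). *)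
From HB Require Import structures.
From mathcomp Require Import all_boot all_order all_algebra.
From mathcomp Require Import finmap.
Set Implicit Arguments. Unset Strict Implicit. Unset Printing Implicit Defensive.
Import Order.TTheory GRing.Theory Num.Theory.
Local Open Scope fset_scope.
Local Open Scope ring_scope.

Definition tversky_index (R : realFieldType) (a b : R) (X Y : {fset nat}) : R :=
  (#|` X `&` Y|)%:R /
  ((#|` X `&` Y|)%:R + a * (#|` X `\` Y|)%:R + b * (#|` Y `\` X|)%:R).

Definition tversky_dist (R : realFieldType) (a b : R) (X Y : {fset nat}) : R :=
  if X `|` Y == fset0 then 0 else 1 - tversky_index a b X Y.

Definition is_metric (R : realFieldType) (T : Type) (d : T -> T -> R) : Prop :=
  [/\ (forall x y, 0 <= d x y),
      (forall x y, d x y = 0 <-> x = y),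
      (forall x y, d x y = d y x)
    & (forall x y z, d x z <= d x y + d y z)].

(* Main.v *)
Require Import Defs.
From HB Require Import structures.
From mathcomp Require Import all_boot all_order all_algebra.
From mathcomp Require Import finmap.
From mathcomp Require Import ring lra zify.
Import Order.TTheory GRing.Theory Num.Theory.
Local Open Scope ring_scope.
Local Open Scope fset_scope.
Lemma card_sub (U A : {fset nat}) : A `<=` U ->
  #|` A| = \sum_(i <- U) (i \in A : nat).
Proof.
move=> sAU; rewrite card_fset_sum1.
rewrite (@eq_big_seq _ _ _ _ _ (fun _ => 1%N) (fun i => (i \in A : nat))); last by move=> x /= ->.
by apply: big_fset_incl => // x _ /negbTE ->.
Qed.

Section Comb.
Variables X Y Z : {fset nat}.
Let U := X `|` Y `|` Z.

Ltac cs := repeat match goal with |- context[?x \in ?S] => case: (x \in S) end.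
Ltac sub := apply/fsubsetP => ?; rewrite /U !inE; by cs.

Ltac pw := move=> ? _; rewrite !inE; by cs.

Lemma c_union1 : #|` X `|` Y| = (#|` X `&` Y| + #|` X `\` Y| + #|` Y `\` X|)%N.
Proof.
rewrite !(@card_sub U); try sub.
rewrite -!big_split /=; apply: eq_big_seq; pw.
Qed.

Lemma c_tot : #|` U| = (#|` X `&` Z| + #|` X `\` Z| + #|` Z `\` X| + #|` Y `\` (X `|` Z)|)%N.
Proof.
rewrite !(@card_sub U); try sub.
rewrite -!big_split /=; apply: eq_big_seq; pw.
Qed.

Lemma c_le : (#|` X `\` Z| + #|` Z `\` X| + #|` Y `\` (X `|` Z)| <=
   #|` X `\` Y| + #|` Y `\` X| + (#|` Y `\` Z| + #|` Z `\` Y|))%N.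
Proof.
rewrite !(@card_sub U); try sub.
rewrite -!big_split /=; apply: leq_sum; pw.
Qed.

Lemma c_u1 : (#|` X `|` Y| <= #|` U|)%N.
Proof. apply: fsubset_leq_card; sub. Qed.
Lemma c_u2 : (#|` Y `|` Z| <= #|` U|)%N.
Proof. apply: fsubset_leq_card; sub. Qed.
End Comb.

Local Open Scope ring_scope.
Section Real.
Variable R : realFieldType.
Implicit Types p q r s i t m W : R.

Lemma divle p q r s : 0 < q -> 0 < s -> (p / q <= r / s) = (p * s <= r * q).
Proof. by move=> q0 s0; rewrite ler_pdivrMr // mulrAC ler_pdivlMr. Qed.

Lemma div_anti p q r : 0 <= p -> 0 < q -> q <= r -> p / r <= p / q.
Proof.
move=> p0 q0 qr; have r0 : 0 < r by lra.
by rewrite divle // ler_wpM2l.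
Qed.

Variable a : R.
Hypothesis a1 : 1 <= a.

Definition phi t := a * t / (1 + (a - 1) * t).
Definition D i s := a * s / (i + a * s).
Definition J i s := s / (i + s).

Lemma J_ge0 i s : 0 <= i -> 0 <= s -> 0 <= J i s.
Proof. by move=> *; rewrite /J divr_ge0 //; lra. Qed.

Lemma Dphi i s : 0 <= i -> 0 <= s -> D i s = phi (J i s).
Proof. have a1' := a1.
move=> i0 s0; rewrite /D /phi /J.
have [u0|u0] : i + s = 0 \/ 0 < i + s by lra.
  have -> : s = 0 by lra.
  have -> : i = 0 by lra.
  by rewrite !(mulr0, mul0r, addr0).
have h1 : i + a * s != 0.
  have h : 0 <= (a - 1) * s by apply: mulr_ge0; [rewrite subr_ge0 | ].
  apply/lt0r_neq0; nra.
have h2 : i + s != 0 by apply/eqP; lra.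
have h3 : 1 + (a - 1) * (s / (i + s)) != 0.
  have h : 0 <= s / (i + s) by apply: divr_ge0; lra.
  have h' : 0 <= (a - 1) * (s / (i + s)) by apply: mulr_ge0; [rewrite subr_ge0|].
  apply/lt0r_neq0; lra.
field; rewrite ?h2 ?andbT //.
apply/eqP => E; move/eqP: h1; apply; rewrite -E; ring.
Qed.

Lemma phi_mono s t : 0 <= s -> s <= t -> phi s <= phi t.
Proof. have a1' := a1.
move=> s0 st; have h1 : 0 <= (a - 1) * s by apply: mulr_ge0; [rewrite subr_ge0|].
have h2 : 0 <= (a - 1) * t.
  apply: mulr_ge0. by rewrite subr_ge0. exact: le_trans st.
have h3 : 0 <= a * (t - s) by apply: mulr_ge0 => //; lra.
rewrite /phi divle; [|lra|lra].
have -> : a * s * (1 + (a - 1) * t) = a * s + (a - 1) * a * s * t by ring.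
have -> : a * t * (1 + (a - 1) * s) = a * t + (a - 1) * a * s * t by ring.
lra.
Qed.

Lemma phi_sub s t : 0 <= s -> 0 <= t -> phi (s + t) <= phi s + phi t.
Proof. have a1' := a1.
move=> s0 t0; rewrite /phi mulrDr mulrDl.
have hs : 0 <= (a - 1) * s by apply: mulr_ge0 => //; lra.
have ht : 0 <= (a - 1) * t by apply: mulr_ge0 => //; lra.
have d0 : 0 < 1 + (a - 1) * (s + t) by rewrite mulrDr; lra.
have p1 : 0 <= (a * s) * ((a - 1) * t) by apply: mulr_ge0 => //; apply: mulr_ge0 => //; lra.
have p2 : 0 <= (a * t) * ((a - 1) * s) by apply: mulr_ge0 => //; apply: mulr_ge0 => //; lra.
by apply: lerD; rewrite divle; try lra.
Qed.

Lemma Jle i s m : 0 <= i -> 0 <= s -> 0 <= m -> 0 < i + s + m ->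
  J i s <= (s + m) / (i + s + m).
Proof. have a1' := a1.
move=> i0 s0 m0 W0; rewrite /J.
have [u0|u0] : i + s = 0 \/ 0 < i + s by lra.
  rewrite u0 invr0 mulr0 divr_ge0 //; lra.
rewrite divle //; nra.
Qed.

Lemma Jge i s W : 0 <= i -> 0 <= s -> i + s <= W -> s / W <= J i s.
Proof. have a1' := a1.
move=> i0 s0 sW; rewrite /J.
have [u0|u0] : i + s = 0 \/ 0 < i + s by lra.
  have -> : s = 0 by lra.
  by rewrite !mul0r.
exact: div_anti.
Qed.

Lemma Dtri i1 s1 i2 s2 i3 s3 m :
  0 <= i1 -> 0 <= s1 -> 0 <= i2 -> 0 <= s2 -> 0 <= i3 -> 0 <= s3 -> 0 <= m ->
  i2 + s2 <= i1 + s1 + m -> i3 + s3 <= i1 + s1 + m -> s1 + m <= s2 + s3 ->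
  D i1 s1 <= D i2 s2 + D i3 s3.
Proof. have a1' := a1.
move=> e1 f1 e2 f2 e3 f3 m0 h2 h3 hs.
rewrite !Dphi //.
have g1 := J_ge0 _ _ e1 f1; have g2 := J_ge0 _ _ e2 f2; have g3 := J_ge0 _ _ e3 f3.
have JJ : J i1 s1 <= J i2 s2 + J i3 s3.
  have [W0|W0] : i1 + s1 + m = 0 \/ 0 < i1 + s1 + m by lra.
    have -> : s1 = 0 by lra.
    rewrite {1}/J mul0r; lra.
  have k1 := Jle _ _ _ e1 f1 m0 W0.
  have k2 := Jge _ _ _ e2 f2 h2.
  have k3 := Jge _ _ _ e3 f3 h3.
  have k4 : (s1 + m) / (i1 + s1 + m) <= s2 / (i1 + s1 + m) + s3 / (i1 + s1 + m).
    by rewrite -mulrDl ler_wpM2r // invr_ge0; lra.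
  lra.
have := phi_sub _ _ g2 g3; have := phi_mono _ _ g1 JJ; lra.
Qed.
End Real.
Arguments D {R} a i s.

Lemma dist_eq (R : realFieldType) (a : R) (X Y : {fset nat}) : 0 < a ->
  tversky_dist a a X Y =
  D a (#|` X `&` Y|)%:R ((#|` X `\` Y| + #|` Y `\` X|)%N)%:R.
Proof.
move=> a0; rewrite /tversky_dist /tversky_index /D.
case: ifP => [/eqP E|NE].
  have := c_union1 X Y X; rewrite E cardfs0 => /eqP; rewrite eq_sym.
  rewrite !addn_eq0 => /andP[/andP[/eqP-> /eqP->] /eqP->].
  by rewrite !(mulr0, mul0r, addr0).
have u0 : (0 < #|` X `|` Y|)%N by rewrite cardfs_gt0 NE.
rewrite (c_union1 X Y X) in u0.
move: u0; set i := #|` _ `&` _|; set p := #|` X `\` Y|; set q := #|` Y `\` X|.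
move=> u0.
have i0 : 0 <= i%:R :> R by [].
have p0 : 0 <= p%:R :> R by [].
have q0 : 0 <= q%:R :> R by [].
have u0' : 0 < i%:R + p%:R + q%:R :> R by rewrite -!natrD ltr0n.
have den : 0 < i%:R + a * p%:R + a * q%:R.
  have [pq|pq] : p%:R + q%:R = 0 :> R \/ 0 < p%:R + q%:R :> R by lra.
    have -> : p%:R = 0 :> R by lra.
    have -> : q%:R = 0 :> R by lra.
    rewrite !mulr0; lra.
  have : 0 < a * (p%:R + q%:R) by apply: mulr_gt0.
  rewrite mulrDr; lra.
rewrite natrD; field.
apply/eqP; rewrite mulrDr addrA; lra.
Qed.

Ltac fs := apply/fsetP => -[|[|?]]; rewrite !inE //.

Local Notation X0 := [fset 0%N].
Local Notation Y0 := [fset 0%N; 1%N].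
Local Notation Z0 := [fset 1%N].

Theorem mainTheorem2 (R : realFieldType) (a b : R) (ha : 0 < a) (hb : 0 < b) :
  is_metric (tversky_dist a b) <-> (a = b /\ 1 <= a).
Proof.
split.
  move=> [h0 hid hsym htri].
  have e1 : X0 `&` Y0 = X0 by fs.
  have e2 : X0 `\` Y0 = fset0 by fs.
  have e3 : Y0 `\` X0 = Z0 by fs.
  have e4 : X0 `&` Z0 = fset0 by fs.
  have e5 : X0 `\` Z0 = X0 by fs.
  have e6 : Z0 `\` X0 = Z0 by fs.
  have e7 : Y0 `&` Z0 = Z0 by fs.
  have e8 : Y0 `\` Z0 = X0 by fs.
  have e9 : Z0 `\` Y0 = fset0 by fs.
  have f1 : Y0 `&` X0 = X0 by rewrite fsetIC.
  have ne : forall A B : {fset nat}, (0%N \in A) -> A `|` B == fset0 = false.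
    move=> A B hA; apply/negP => /eqP E.
    by have := in_fset0 0%N; rewrite -E inE hA.
  have dXY : tversky_dist a b X0 Y0 = 1 - 1 / (1 + b).
    rewrite /tversky_dist ne ?inE // /tversky_index e1 e2 e3 cardfs0 !cardfs1.
    by rewrite !(mulr0, addr0, mulr1).
  have dYX : tversky_dist a b Y0 X0 = 1 - 1 / (1 + a).
    rewrite /tversky_dist ne ?inE // /tversky_index f1 e2 e3 cardfs0 !cardfs1.
    by rewrite !(mulr0, addr0, mulr1).
  have dXZ : tversky_dist a b X0 Z0 = 1.
    by rewrite /tversky_dist ne ?inE // /tversky_index e4 cardfs0 !mul0r subr0.
  have dYZ : tversky_dist a b Y0 Z0 = 1 - 1 / (1 + a).
    rewrite /tversky_dist ne ?inE // /tversky_index e7 e8 e9 cardfs0 !cardfs1.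
    by rewrite !(mulr0, addr0, mulr1).
  have ab : a = b.
    have := hsym X0 Y0; rewrite dXY dYX !div1r.
    by move=> /addrI/oppr_inj/invr_inj/addrI.
  split => //.
  have := htri X0 Y0 Z0; rewrite dXY dXZ dYZ -ab div1r.
  have t1 : (1 + a)^-1 * (1 + a) = 1 by rewrite mulVf //; apply/lt0r_neq0; lra.
  move: t1; set t := (1 + a)^-1 => t1 tri.
  have h : 0 <= (1 - 2 * t) * (1 + a) by apply: mulr_ge0 => //; lra.
  have : (1 - 2 * t) * (1 + a) = 1 + a - 2 * (t * (1 + a)) by ring.
  rewrite t1; lra.
move=> [ab a1]; subst b.
split.
- move=> X Y; rewrite dist_eq // /D; apply: divr_ge0.
    by apply: mulr_ge0 => //; lra.
  by apply: addr_ge0 => //; apply: mulr_ge0 => //; lra.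
- move=> X Y; rewrite dist_eq // /D; split; last first.
    by move=> ->; rewrite fsetDv cardfs0 !(mulr0, mul0r).
  move=> /eqP; rewrite mulf_eq0 invr_eq0.
  have hs : a * ((#|` X `\` Y| + #|` Y `\` X|)%N)%:R == 0 -> X = Y.
    rewrite mulf_eq0 (negbTE (lt0r_neq0 ha)) /= pnatr_eq0 addn_eq0.
    rewrite !cardfs_eq0 !fsetD_eq0 => /andP[h1 h2].
    by apply/eqP; rewrite eqEfsubset h1 h2.
  case/orP => // E; apply: hs.
  have h1 : 0 <= a * ((#|` X `\` Y| + #|` Y `\` X|)%N)%:R by apply: mulr_ge0 => //; lra.
  have h2 : 0 <= (#|` X `&` Y|)%:R :> R by [].
  apply/eqP; move/eqP: E; lra.
- by move=> X Y; rewrite !dist_eq // fsetIC addnC.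
- move=> X Y Z; rewrite !dist_eq //.
  apply: (@Dtri R a a1 _ _ _ _ _ _ (#|` Y `\` (X `|` Z)|)%:R) => //; rewrite -?natrD ?ler_nat.
  + have := c_u1 X Y Z; have := c_union1 X Y X; have := c_tot X Y Z; lia.
  + have := c_u2 X Y Z; have := c_union1 Y Z Y; have := c_tot X Y Z; lia.
  + have := c_le X Y Z; lia.
Qed.
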